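(* Let $\mathsf V$ be a variety in which every 1-generated exact algebra is projective. Then for every algebraic e-generalization problem $h$ for $\mathsf V$, $\mathscr G(h)=\{\theta\in\mathrm{Con}(\mathbf F_{\mathsf V}(z)):\theta\subseteq\ker(h),\ \theta \text{ projective in } \mathsf V\}$.
   Context: $\mathbf F_{\mathsf V}(z)$ is the free algebra of the variety $\mathsf V$ on one generator $z$, and $\mathrm{Con}(\mathbf F_{\mathsf V}(z))$ its congruence lattice. An algebra is projective in $\mathsf V$ iff it is a retract of a free algebra of $\mathsf V$; it is exact in $\mathsf V$ if isomorphic to a finitely generated subalgebra of a finitely generated free algebra of $\mathsf V$. A congruence $\theta$ of $\mathbf F_{\mathsf V}(z)$ is projective if $\mathbf F_{\mathsf V}(z)/\theta$ is projective in $\mathsf V$. An algebraic e-generalization problem is a homomorphism $h:\mathbf F_{\mathsf V}(z)\to\prod_{k=1}^m\mathbf E_k$ with each $\mathbf E_k$ a 1-generated exact algebra and $p_k\circ h$ surjective for each projection $p_k$. A solution of $h$ is a homomorphism $g:\mathbf F_{\mathsf V}(z)\to\mathbf P$ with $\mathbf P$ finitely generated and projective such that $f\circ g=h$ for some homomorphism $f$. $\mathscr G(h)=\{\ker(g): g\text{ a solution of } h\}$. *)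

(* Defs.v *)
From Stdlib Require Import ClassicalEpsilon.
From mathcomp Require Import all_boot.
Set Implicit Arguments. Unset Strict Implicit. Unset Printing Implicit Defensive.

Record signature := Signature { op : Type; arity : op -> nat }.

Record algebra (S : signature) := Algebra {
  carrier :> Type;
  interp : forall o : op S, ('I_(arity o) -> carrier) -> carrier }.
Arguments interp {S} a o _ : rename.
Arguments Algebra {S} carrier interp : rename.

Inductive term (S : signature) (X : Type) : Type :=
| Var : X -> term S X
| App : forall o : op S, ('I_(arity o) -> term S X) -> term S X.
Arguments Var {S X} _.
Arguments App {S X} o _.

Fixpoint eval (S : signature) (X : Type) (A : algebra S) (v : X -> A)
  (t : term S X) : A :=
  match t with
  | Var x => v x
  | App o args => interp A o (fun i => @eval _ _ A v (args i))
  end.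
Arguments eval {S X} A v t.

(* A variety is given by a set of identities (Birkhoff: varieties = equational classes). *)
Record variety := Variety {
  vsig : signature;
  identities : term vsig nat -> term vsig nat -> Prop }.
Arguments identities : clear implicits.

Definition in_var (V : variety) (A : algebra (vsig V)) : Prop :=
  forall s t, identities V s t -> forall v : nat -> A, eval A v s = eval A v t.

Definition is_hom (S : signature) (A B : algebra S) (f : A -> B) : Prop :=
  forall (o : op S) (args : 'I_(arity o) -> A),
    f (interp A o args) = interp B o (fun i => f (args i)).

(* Quotients by an (equivalence) relation, as sets of classes. *)
Definition quot (T : Type) (R : T -> T -> Prop) : Type :=
  {P : T -> Prop | exists t, P = R t}.
Definition qcls (T : Type) (R : T -> T -> Prop) (t : T) : quot R :=
  exist (fun P => exists t, P = R t) (R t) (ex_intro _ t erefl).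
Definition qrepr (T : Type) (R : T -> T -> Prop) (q : quot R) : T :=
  proj1_sig (constructive_indefinite_description _ (proj2_sig q)).

(* Free algebra F_V(X): terms modulo the identities valid in V. *)
Definition veq (V : variety) (X : Type) (s t : term (vsig V) X) : Prop :=
  forall A : algebra (vsig V), in_var A ->
    forall v : X -> A, eval A v s = eval A v t.

Definition free_alg (V : variety) (X : Type) : algebra (vsig V) :=
  @Algebra (vsig V) (quot (@veq V X))
    (fun o args => qcls (@veq V X) (App o (fun i => qrepr (args i)))).

Definition congruence (S : signature) (A : algebra S) (th : A -> A -> Prop) : Prop :=
  [/\ (forall x, th x x), (forall x y, th x y -> th y x),
      (forall x y z, th x y -> th y z -> th x z) &
      (forall (o : op S) (a b : 'I_(arity o) -> A),
          (forall i, th (a i) (b i)) -> th (interp A o a) (interp A o b))].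

Definition quot_alg (S : signature) (A : algebra S) (th : A -> A -> Prop) : algebra S :=
  @Algebra S (quot th) (fun o args => qcls th (interp A o (fun i => qrepr (args i)))).

Definition retract (S : signature) (A B : algebra S) : Prop :=
  exists (i : A -> B) (r : B -> A), [/\ is_hom i, is_hom r & forall x, r (i x) = x].

Definition projective (V : variety) (A : algebra (vsig V)) : Prop :=
  exists X : Type, retract A (free_alg V X).

Definition fin_gen (S : signature) (A : algebra S) : Prop :=
  exists (k : nat) (g : 'I_k -> A), forall x, exists t : term S 'I_k, x = eval A g t.

Definition one_gen (S : signature) (A : algebra S) : Prop :=
  exists a : A, forall x, exists t : term S unit, x = eval A (fun _ => a) t.

(* Exact in V: isomorphic to the subalgebra of some F_V(n) generated by finitely
   many elements g_1..g_k (i.e. an injective homomorphism onto that subalgebra). *)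
Definition exact (V : variety) (A : algebra (vsig V)) : Prop :=
  exists (n k : nat) (g : 'I_k -> free_alg V 'I_n) (e : A -> free_alg V 'I_n),
    [/\ is_hom e, injective e &
        forall y, (exists x, e x = y) <-> (exists t : term (vsig V) 'I_k, y = eval _ g t)].

Definition prod_alg (S : signature) (m : nat) (E : 'I_m -> algebra S) : algebra S :=
  @Algebra S (forall k : 'I_m, E k)
    (fun o args => fun k => interp (E k) o (fun i => args i k)).

Definition egen_problem (V : variety) (m : nat) (E : 'I_m -> algebra (vsig V))
  (h : free_alg V unit -> prod_alg E) : Prop :=
  [/\ forall k, exact (E k) /\ one_gen (E k),
      is_hom h &
      forall k (y : E k), exists x, h x k = y].

Definition is_solution (V : variety) (m : nat) (E : 'I_m -> algebra (vsig V))
  (h : free_alg V unit -> prod_alg E) (P : algebra (vsig V))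
  (g : free_alg V unit -> P) : Prop :=
  [/\ fin_gen P, projective P, is_hom g &
      exists f : P -> prod_alg E, is_hom f /\ forall x, f (g x) = h x].

Definition Gset (V : variety) (m : nat) (E : 'I_m -> algebra (vsig V))
  (h : free_alg V unit -> prod_alg E)
  (th : free_alg V unit -> free_alg V unit -> Prop) : Prop :=
  exists (P : algebra (vsig V)) (g : free_alg V unit -> P),
    is_solution h g /\ th = (fun x y => g x = g y).

(* Main.v *)
Require Import Defs.
From mathcomp Require Import all_boot.
From Stdlib Require Import ClassicalEpsilon FunctionalExtensionality PropExtensionality ProofIrrelevance.
Set Implicit Arguments. Unset Strict Implicit. Unset Printing Implicit Defensive.

Lemma sig_ext (A : Type) (P : A -> Prop) (x y : sig P) :
  proj1_sig x = proj1_sig y -> x = y.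
Proof. destruct x as [x px], y as [y py]; simpl; intros ->. f_equal. apply proof_irrelevance. Qed.

Lemma qreprE T (R : T -> T -> Prop) (q : quot R) : proj1_sig q = R (qrepr q).
Proof. unfold qrepr. destruct (constructive_indefinite_description _ _) as [t Ht]. simpl. exact Ht. Qed.

Lemma qreprK T (R : T -> T -> Prop) (q : quot R) : qcls R (qrepr q) = q.
Proof. apply sig_ext. simpl. symmetry. apply qreprE. Qed.

Definition equivr T (R : T -> T -> Prop) :=
  [/\ forall x, R x x, forall x y, R x y -> R y x & forall x y z, R x y -> R y z -> R x z].

Lemma qcls_eq T (R : T -> T -> Prop) (HR : equivr R) x y : qcls R x = qcls R y <-> R x y.
Proof.
  case: HR => Hr Hs Ht; split.
  - move=> E. have E' : proj1_sig (qcls R x) = proj1_sig (qcls R y) by rewrite E.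
    simpl in E'. rewrite E'. apply Hr.
  - move=> Hxy. apply sig_ext; simpl. apply functional_extensionality => z.
    apply propositional_extensionality; split; eauto.
Qed.

Lemma qrepr_cls T (R : T -> T -> Prop) (HR : equivr R) x : R x (qrepr (qcls R x)).
Proof.
  have := qreprK (qcls R x). move/(qcls_eq HR). case: HR => _ Hs _. auto.
Qed.

Lemma cong_equiv S (A : algebra S) (th : A -> A -> Prop) : congruence th -> equivr th.
Proof. by case=> a b c _; split. Qed.

Lemma veq_equiv V X : equivr (@veq V X).
Proof.
  split.
  - by move=> x A HA v.
  - move=> x y H A HA v. symmetry. by apply H.
  - move=> x y z H1 H2 A HA v. by rewrite (H1 A HA v) (H2 A HA v).
Qed.

Lemma veq_App V X o (a b : 'I_(arity o) -> term (vsig V) X) :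
  (forall i, veq (a i) (b i)) -> veq (App o a) (App o b).
Proof.
  move=> H A HA v /=. f_equal. apply functional_extensionality => i. by apply H.
Qed.

Lemma interpF V X o (a : 'I_(arity o) -> term (vsig V) X) :
  interp (free_alg V X) o (fun i => qcls (@veq V X) (a i)) = qcls (@veq V X) (App o a).
Proof.
  simpl. apply/(qcls_eq (@veq_equiv V X)). apply veq_App => i.
  have := qrepr_cls (@veq_equiv V X) (a i). case: (@veq_equiv V X) => _ Hs _. auto.
Qed.

Fixpoint subst S X Y (s : X -> term S Y) (t : term S X) : term S Y :=
  match t with
  | Var x => s x
  | App o a => App o (fun i => subst s (a i))
  end.

Lemma eval_subst S X Y (A : algebra S) (v : Y -> A) (s : X -> term S Y) t :
  eval A v (subst s t) = eval A (fun x => eval A v (s x)) t.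
Proof.
  induction t as [x|o a IH]; simpl; first done.
  f_equal. apply functional_extensionality => i. apply IH.
Qed.

Lemma subst_Var S X (t : term S X) : subst (fun x => Var x) t = t.
Proof.
  induction t as [x|o a IH]; simpl; first done.
  f_equal. apply functional_extensionality => i. apply IH.
Qed.

Lemma evalF V X Y (s : X -> term (vsig V) Y) t :
  eval (free_alg V Y) (fun x => qcls (@veq V Y) (s x)) t = qcls (@veq V Y) (subst s t).
Proof.
  induction t as [x|o a IH]; first done.
  transitivity (interp (free_alg V Y) o (fun i => qcls (@veq V Y) (subst s (a i)))).
  - change (interp (free_alg V Y) o (fun i => eval (free_alg V Y) (fun x => qcls (@veq V Y) (s x)) (a i)) =
      interp (free_alg V Y) o (fun i => qcls (@veq V Y) (subst s (a i)))).
    f_equal. apply functional_extensionality => i. apply IH.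
  - by rewrite interpF.
Qed.

Lemma eval_hom S (A B : algebra S) (f : A -> B) (Hf : is_hom f) X (v : X -> A) t :
  f (eval A v t) = eval B (fun x => f (v x)) t.
Proof.
  induction t as [x|o a IH]; simpl; first done.
  rewrite Hf. f_equal. apply functional_extensionality => i. apply IH.
Qed.

Lemma in_var_free V X : in_var (free_alg V X).
Proof.
  move=> s t Hst v.
  have Ev : v = fun n => qcls (@veq V X) (qrepr (v n)).
    apply functional_extensionality => n. by rewrite qreprK.
  rewrite Ev !evalF. apply/(qcls_eq (@veq_equiv V X)).
  move=> A HA w. rewrite !eval_subst. by apply HA.
Qed.

Definition ext V X (A : algebra (vsig V)) (a : X -> A) (q : free_alg V X) : A :=
  eval A a (qrepr q).

Lemma ext_cls V X (A : algebra (vsig V)) (HA : in_var A) (a : X -> A) t :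
  ext a (qcls (@veq V X) t) = eval A a t.
Proof.
  unfold ext. have H := qrepr_cls (@veq_equiv V X) t. symmetry. by apply H.
Qed.

Lemma ext_hom V X (A : algebra (vsig V)) (HA : in_var A) (a : X -> A) : is_hom (ext a).
Proof. move=> o args. simpl. by rewrite ext_cls. Qed.

Lemma free_elem V X (q : free_alg V X) :
  q = eval (free_alg V X) (fun x => qcls (@veq V X) (Var x)) (qrepr q).
Proof. by rewrite evalF subst_Var qreprK. Qed.

Lemma hom_unique V X (B : algebra (vsig V)) (f f' : free_alg V X -> B) :
  is_hom f -> is_hom f' ->
  (forall x, f (qcls (@veq V X) (Var x)) = f' (qcls (@veq V X) (Var x))) ->
  forall q, f q = f' q.
Proof.
  move=> Hf Hf' H q. rewrite (free_elem q) !(eval_hom Hf) !(eval_hom Hf').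
  f_equal. apply functional_extensionality => x. apply H.
Qed.

Lemma retract_in_var V X (P : algebra (vsig V)) :
  retract P (free_alg V X) -> in_var P.
Proof.
  move=> [i [r [Hi Hr Hri]]] s t Hst v.
  rewrite -(Hri (eval P v s)) -(Hri (eval P v t)) !(eval_hom Hi).
  by rewrite (in_var_free Hst).
Qed.

Lemma cls_hom S (A : algebra S) (th : A -> A -> Prop) : congruence th -> is_hom (A := A) (B := quot_alg th) (qcls th).
Proof.
  move=> Hc o args. have He := cong_equiv Hc. simpl.
  apply/(qcls_eq He). case: Hc => _ _ _ Ho. apply Ho => i. apply (qrepr_cls He).
Qed.

Lemma gen1 V (b : free_alg V unit) :
  b = eval (free_alg V unit) (fun _ => qcls (@veq V unit) (Var tt)) (qrepr b).
Proof.
  rewrite {1}(free_elem b). f_equal. apply functional_extensionality. by case.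
Qed.

Lemma eval_const S X Y (A : algebra S) (a : A) (y : Y) (t : term S X) :
  eval A (fun _ => a) (subst (fun _ => Var y) t) = eval A (fun _ => a) t.
Proof. by rewrite eval_subst. Qed.

Theorem corollary4p7 (V : variety)
  (Hproj : forall A : algebra (vsig V), one_gen A -> exact A -> projective A)
  (m : nat) (E : 'I_m -> algebra (vsig V)) (h : free_alg V unit -> prod_alg E)
  (Hh : egen_problem h)
  (th : free_alg V unit -> free_alg V unit -> Prop) :
  Gset h th <->
  [/\ congruence th, (forall x y, th x y -> h x = h y) & projective (quot_alg th)].
Proof.
  case: Hh => _ Hhh _.
  set z := qcls (@veq V unit) (Var tt).
  split.
  - move=> [P [g [[Pfg Pproj Hg [f [Hf Hfg]]] ->]]].
    have Hc : congruence (fun x y : free_alg V unit => g x = g y).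
      split.
      + done.
      + by move=> x y ->.
      + by move=> x y w -> ->.
      + move=> o a b H. rewrite !Hg. f_equal. apply functional_extensionality => i. apply H.
    have He := cong_equiv Hc.
    split.
    + exact Hc.
    + move=> x y E1. by rewrite -!Hfg E1.
    + apply Hproj.
      * exists (qcls _ z) => x. exists (qrepr (qrepr x)).
        rewrite -{1}(qreprK x) {1}(gen1 (qrepr x)). by rewrite (eval_hom (cls_hom Hc)).
      * case: Pproj => X [i [r [Hi Hr Hri]]].
        have PV : in_var P by apply: (retract_in_var (X := X)); exists i, r.
        case: Pfg => k [p Hp].
        pose phi := ext (V := V) (X := 'I_k) p.
        have Hphi : is_hom phi by apply ext_hom.
        pose c := fun x : X => qcls (@veq V 'I_k)
          (proj1_sig (constructive_indefinite_description _ (Hp (r (qcls (@veq V X) (Var x)))))).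
        have Hc1 : forall x, phi (c x) = r (qcls (@veq V X) (Var x)).
          move=> x. rewrite /phi /c ext_cls //.
          by destruct (constructive_indefinite_description _ _).
        pose psi' := ext (V := V) (X := X) (A := free_alg V 'I_k) c.
        have Hpsi' : is_hom psi' by apply ext_hom; apply in_var_free.
        have Hpr : forall q, phi (psi' q) = r q.
          apply hom_unique => //.
          * move=> o a. by rewrite /= Hpsi' Hphi.
          * move=> x. by rewrite /psi' ext_cls ?Hc1 //; apply in_var_free.
        pose G := fun x => psi' (i (g x)).
        have HG : is_hom G by move=> o a; rewrite /G Hg Hi Hpsi'.
        have HGi : forall x y, G x = G y -> g x = g y.
          move=> x y E1. rewrite -(Hri (g x)) -(Hri (g y)) -!Hpr. by rewrite /G in E1; rewrite E1.
        exists k, 1, (fun _ => G z), (fun q => G (qrepr q)). split.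
        -- move=> o args. simpl.
           have E1 : G (qrepr (qcls (fun x y => g x = g y)
              (interp (free_alg V unit) o (fun i0 => qrepr (args i0))))) =
              G (interp (free_alg V unit) o (fun i0 => qrepr (args i0))).
             rewrite /G. f_equal. f_equal. symmetry. apply (qrepr_cls He).
           by rewrite E1 HG.
        -- move=> q1 q2 /HGi E1. by rewrite -(qreprK q1) -(qreprK q2); apply/(qcls_eq He).
        -- move=> y; split.
           ++ move=> [x <-]. exists (subst (fun _ => Var ord0) (qrepr (qrepr x))).
              by rewrite eval_const {1}(gen1 (qrepr x)) (eval_hom HG).
           ++ move=> [t ->].
              exists (qcls (fun x y => g x = g y) (eval (free_alg V unit) (fun _ => z) (subst (fun _ => Var tt) t))).
              have -> : G (qrepr (qcls (fun x y => g x = g y) (eval (free_alg V unit) (fun _ => z) (subst (fun _ => Var tt) t)))) =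
                 G (eval (free_alg V unit) (fun _ => z) (subst (fun _ => Var tt) t)).
                rewrite /G. f_equal. f_equal. symmetry. apply (qrepr_cls He).
              by rewrite (eval_hom HG) eval_const.
  - move=> [Hc Hker Hpr]. have He := cong_equiv Hc.
    exists (quot_alg th), (qcls th). split; last first.
      apply functional_extensionality => x; apply functional_extensionality => y.
      apply propositional_extensionality. symmetry. apply (qcls_eq He).
    split.
    + exists 1, (fun _ => qcls th z) => x.
      exists (subst (fun _ => Var ord0) (qrepr (qrepr x))).
      rewrite eval_const -{1}(qreprK x) {1}(gen1 (qrepr x)).
      by rewrite (eval_hom (cls_hom Hc)).
    + exact Hpr.
    + exact (cls_hom Hc).
    + exists (fun q => h (qrepr q)). split.
      * move=> o args. simpl.
        rewrite -(Hker _ _ (qrepr_cls He _)). by rewrite Hhh.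
      * move=> x. symmetry. apply Hker. apply (qrepr_cls He).
Qed.
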